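(* Let $\sigma=(V,\mathrm{atime},\mathrm{pos})$ be an instance of $k$-MPMD on an $H$-metric space with parameter $\gamma$. Let $\mathcal M$ be any perfect $k$-way matching of $V$ and let $M=\{\{u,v\}\in E:\exists F\in\mathcal M,\ u,v\in F\}$. Then the characteristic vector $x=\mathbb 1_M\in\{0,1\}^E$ is a feasible solution of the linear program $(\mathcal P')$. Moreover, $\mathcal P'(\sigma)\le\mathcal{OPT}(\sigma)$, where $\mathcal P'(\sigma)$ is the optimal value of $(\mathcal P')$.
   Context: $k\ge2$. An $H$-metric with parameter $\gamma$ (integer, $1\le\gamma\le k-1$) is a map $d_H:\chi^k\to[0,\infty)$ that is invariant under permutation of its arguments, is zero iff all arguments are equal, satisfies $d_H(p_1,\ldots,p_k)\le d_H(p_1,\ldots,p_i,a,\ldots,a)+d_H(a,\ldots,a,p_{i+1},\ldots,p_k)$ for all $p_j,a\in\chi$ and $i\in\{1,\dots,k\}$ (with $k-i$, resp. $i$, copies of $a$), and satisfies: $d_H(p)\le d_H(p')$ whenever the set of distinct entries of $p$ is a proper subset of that of $p'$, and $d_H(p)\le\gamma d_H(p')$ whenever these sets are equal. An instance of $k$-MPMD is $\sigma=(V,\mathrm{atime},\mathrm{pos})$ with $V=\{u_1,\ldots,u_m\}$ a set of requests ($m$ a multiple of $k$), arrival times $\mathrm{atime}:V\to\mathbb R_{\ge0}$ nondecreasing in the index, and positions $\mathrm{pos}:V\to\chi$. A perfect $k$-way matching is a partition of $V$ into $k$-element sets. For a $k$-element $F=\{v_1,\ldots,v_k\}$, $\mathrm{opt\text{-}cost}(F):=d_H(\mathrm{pos}(v_1),\ldots,\mathrm{pos}(v_k))+\sum_{i=1}^k(\max_j\mathrm{atime}(v_j)-\mathrm{atime}(v_i))$,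 and $\mathcal{OPT}(\sigma)$ is the minimum of $\sum_{F\in\mathcal M}\mathrm{opt\text{-}cost}(F)$ over perfect $k$-way matchings $\mathcal M$ (the offline optimum). The metric $d$ on $\chi$ is $d(p,q):=d_H(p,q,\ldots,q)+d_H(q,p,\ldots,p)$ (first argument once, second $k-1$ times). $E$ is the set of unordered pairs $\{u,w\}$ of distinct requests, and $\mathrm{opt\text{-}cost}(\{u,w\}):=d(\mathrm{pos}(u),\mathrm{pos}(w))+|\mathrm{atime}(u)-\mathrm{atime}(w)|$. For $S\subseteq V$, $\mathrm{sur}(S):=|S|\bmod k$ and $\delta(S)$ is the set of pairs in $E$ with exactly one element in $S$. The LP $(\mathcal P')$ is: minimize $\sum_{e\in E}\frac{1}{\gamma k^2}\mathrm{opt\text{-}cost}(e)x_e$ subject to $\sum_{e\in\delta(S)}x_e\ge\mathrm{sur}(S)(k-\mathrm{sur}(S))$ for all $S\subseteq V$, and $x_e\ge0$ for all $e\in E$. *)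

(* Defs.v *)
From HB Require Import structures.
From mathcomp Require Import all_boot all_order all_algebra all_fingroup.
From mathcomp Require Import classical_sets reals.
Set Implicit Arguments. Unset Strict Implicit. Unset Printing Implicit Defensive.
Import Order.TTheory GRing.Theory Num.Theory.
Local Open Scope ring_scope.

Section Defs.
Variables (R : realType) (chi : Type) (k : nat).

Definition entries (p : 'I_k -> chi) : chi -> Prop := fun x => exists j, p j = x.

Definition is_Hmetric (dH : ('I_k -> chi) -> R) (gamma : nat) : Prop :=
  (forall p, 0 <= dH p) /\
  [/\ (forall (s : 'S_k) p, dH (fun j => p (s j)) = dH p),
      (forall p, dH p = 0 <-> (forall i j, p i = p j)),
      (forall p (a : chi) (i : nat), (1 <= i <= k)%N ->
         dH p <= dH (fun j => if (val j < i)%N then p j else a)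
                 + dH (fun j => if (val j < i)%N then a else p j)),
      (forall p p', (forall x, entries p x -> entries p' x) ->
                    (exists x, entries p' x /\ ~ entries p x) -> dH p <= dH p') &
      (forall p p', (forall x, entries p x <-> entries p' x) ->
                    dH p <= gamma%:R * dH p')].

Definition dmet (dH : ('I_k -> chi) -> R) (p q : chi) : R :=
  dH (fun j => if val j == 0%N then p else q) + dH (fun j => if val j == 0%N then q else p).

Variables (m : nat) (dH : ('I_k -> chi) -> R)
  (atime : 'I_m -> R) (pos : 'I_m -> chi).

Definition perfect_kmatching (M : {set {set 'I_m}}) : Prop :=
  finset.partition M [set: 'I_m] /\ (forall F, F \in M -> #|F| = k).

Definition opt_cost (F : {set 'I_m}) : R :=
  match enum F with
  | [::] => 0
  | x0 :: _ =>
      dH (fun j : 'I_k => pos (nth x0 (enum F) j))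
      + \sum_(v in F) (\big[Order.max/atime x0]_(w in F) atime w - atime v)
  end.

Definition matching_cost (M : {set {set 'I_m}}) : R := \sum_(F in M) opt_cost F.

Definition OPT : R :=
  inf [set c | exists M, perfect_kmatching M /\ c = matching_cost M].

Definition Epairs : {set {set 'I_m}} := [set e : {set 'I_m} | #|e| == 2%N].

Definition pair_cost (e : {set 'I_m}) : R :=
  match enum e with
  | [:: u; w] => dmet dH (pos u) (pos w) + `|atime u - atime w|
  | _ => 0
  end.

Definition sur (S : {set 'I_m}) : nat := (#|S| %% k)%N.

Definition delta (S : {set 'I_m}) : {set {set 'I_m}} :=
  [set e in Epairs | #|e :&: S| == 1%N].

Variable gamma : nat.

Definition LP_obj (x : {set 'I_m} -> R) : R :=
  \sum_(e in Epairs) (gamma%:R * (k ^ 2)%:R)^-1 * pair_cost e * x e.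

Definition LP_feasible (x : {set 'I_m} -> R) : Prop :=
  (forall S : {set 'I_m},
     ((sur S * (k - sur S))%N)%:R <= \sum_(e in delta S) x e) /\
  (forall e, e \in Epairs -> 0 <= x e).

Definition LP_value : R := inf [set LP_obj x | x in LP_feasible].

Definition pairs_of (M : {set {set 'I_m}}) : {set {set 'I_m}} :=
  [set e in Epairs | [exists F in M, e \subset F]].

Definition char_vec (P : {set {set 'I_m}}) : {set 'I_m} -> R :=
  fun e => if e \in P then 1 else 0.

End Defs.

(* Main.v *)
Require Import Defs.
From HB Require Import structures.
From mathcomp Require Import all_boot all_order all_algebra all_fingroup.
From mathcomp Require Import classical_sets reals.
From mathcomp Require Import zify lra.
Import Order.TTheory GRing.Theory Num.Theory.
Local Open Scope ring_scope.
Lemma g_sub a b k : (a < k)%N -> (b < k)%N ->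
  (((a+b) %% k) * (k - (a+b) %% k) <= a*(k-a) + b*(k-b))%N.
Proof.
move=> ha hb.
have [h|h] := ltnP (a+b) k.
  rewrite modn_small //. nia.
have -> : ((a+b) %% k = a + b - k)%N.
  rewrite -{1}(subnK h) modnDr modn_small //. lia.
nia.
Qed.

Lemma g_sum (I : Type) (r : seq I) (P : pred I) (a : I -> nat) k : (0 < k)%N ->
  (forall i, P i -> a i <= k)%N ->
  (((\sum_(i <- r | P i) a i) %% k) * (k - (\sum_(i <- r | P i) a i) %% k)
     <= \sum_(i <- r | P i) a i * (k - a i))%N.
Proof.
move=> k0 hk; elim: r => [|x r IH]; first by rewrite !big_nil mod0n.
rewrite !big_cons; case: ifP => // Px.
rewrite -modnDm; set u := a x; set s := \sum_(i <- r | P i) a i. have := @g_sub _ _ _ (ltn_pmod u k0) (ltn_pmod s k0). move=> /leq_trans; apply.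
apply: leq_add => //; rewrite /u.
have := hk _ Px; rewrite leq_eqVlt => /orP[/eqP->|h]; first by rewrite modnn.
by rewrite modn_small.
Qed.
Lemma count_DF (m : nat) (M : {set {set 'I_m}}) (S F : {set 'I_m}) :
  F \in M ->
  (#|F :&: S| * #|F :\: S| <=
   #|[set e in delta S :&: pairs_of M | e \subset F]|)%N.
Proof.
move=> FM.
rewrite -cardsX.
pose f := fun uv : 'I_m * 'I_m => [set uv.1; uv.2].
have inj : {in finset.setX (F :&: S) (F :\: S) &, injective f}.
  move=> [u v] [u' v'] /finset.setXP[/= /setIP[_ uS] /setDP[_ vS]]
    /finset.setXP[/= /setIP[_ u'S] /setDP[_ v'S]] /setP eq.
  have := eq u; rewrite !inE eqxx /= => /esym/orP[/eqP eu|/eqP eu].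
    have := eq v; rewrite !inE eqxx orbT => /esym/orP[/eqP ev|/eqP ev].
      by move: vS; rewrite ev u'S.
    by rewrite eu ev.
  by move: v'S; rewrite -eu uS.
rewrite -(card_in_imset inj); apply: subset_leq_card.
apply/fintype.subsetP => e /imsetP[[u v] /finset.setXP[/= /setIP[uF uS] /setDP[vF vS]] ->].
have uv : u != v by apply/eqP => h; subst; rewrite uS in vS.
rewrite /f /= !inE cards2 uv /=.
have -> : [set u; v] :&: S = [set u].
  apply/setP => x; rewrite !inE; apply/idP/idP.
    by case/andP => /orP[] // /eqP -> ; rewrite (negbTE vS).
  by move=> /eqP ->; rewrite eqxx uS.
rewrite cards1 /=.
have sub : [set u; v] \subset F by apply/fintype.subsetP => x; rewrite !inE => /orP[] /eqP ->.
rewrite sub andbT; apply/existsP; exists F; by rewrite FM.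
Qed.
Lemma sum_DF (m : nat) (M D : {set {set 'I_m}}) : finset.trivIset M ->
  (forall e, e \in D -> e != finset.set0) ->
  (\sum_(F in M) #|[set e in D | e \subset F]| <= #|D|)%N.
Proof.
move=> tM D0.
have -> : (\sum_(F in M) #|[set e in D | e \subset F]| =
           \sum_(F in M) \sum_(e in D) (e \subset F : nat))%N.
  apply: eq_bigr => F _; rewrite -sum1_card.
  rewrite [RHS]big_mkcond [LHS]big_mkcond /=; apply: eq_bigr => e _.
  by rewrite inE; case: (e \in D); case: (e \subset F).
rewrite exchange_big /= -sum1_card; apply: leq_sum => e eD.
case: (pickP [pred F in M | e \subset F]) => [F0 /andP[F0M eF0]|none]; last first.
  rewrite big1 // => F FM; have := none F; rewrite /= FM /=.
  by move=> ->.
rewrite (bigD1 F0) //= eF0 big1 // => F /andP[FM nF].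
have /set0Pn[x xe] := D0 e eD.
apply/eqP; rewrite eqb0; apply/negP => eF.
have dis := (finset.trivIsetP tM) F F0 FM F0M nF.
by move: (fintype.subsetP eF0 x xe); rewrite (disjointFr dis (fintype.subsetP eF x xe)).
Qed.
Lemma feas (R : realType) (k m : nat) (M : {set {set 'I_m}}) : (0 < k)%N ->
  perfect_kmatching k M -> LP_feasible k (char_vec R (pairs_of M)).
Proof.
move=> k0 [pM cM]; split; last by move=> e _; rewrite /char_vec; case: ifP.
move=> S.
have -> : \sum_(e in delta S) char_vec R (pairs_of M) e =
          (#|delta S :&: pairs_of M|)%:R.
  rewrite /char_vec -big_mkcondr /= -sum1_card natr_sum.
  by apply: eq_bigl => e; rewrite finset.in_setI.
rewrite ler_nat.
case/and3P: pM => /eqP cov tM _.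
have hS : #|S| = (\sum_(F in M) #|F :&: S|)%N.
  rewrite -sum1_card.
  have -> : (\sum_(x in S) 1 = \sum_(x in finset.cover M | x \in S) 1)%N.
    by apply: eq_bigl => x; rewrite cov inE.
  rewrite big_trivIset_cond //; apply: eq_bigr => F _.
  by rewrite -sum1_card; apply: eq_bigl => x; rewrite inE.
rewrite /sur hS.
have hle : forall F, F \in M -> (#|F :&: S| <= k)%N.
  by move=> F FM; rewrite -(cM F FM); apply: subset_leq_card; apply: subsetIl.
apply: (leq_trans (@g_sum _ (index_enum _) (fun F => F \in M) (fun F => #|F :&: S|) k k0 hle)).
apply: leq_trans _ (@sum_DF _ M (delta S :&: pairs_of M) tM _).
  apply: leq_sum => F FM; rewrite -(cM F FM) -(cardsID S F) addKn.
  exact: count_DF.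
move=> e; rewrite finset.in_setI => /andP[]; rewrite /delta !inE => /andP[e2 _] _.
by apply/eqP => e0; move: e2; rewrite e0 cards0.
Qed.
Lemma le_bigmax_seq (R : realType) (I : eqType) (r : seq I) (P : pred I)
  (f : I -> R) (i0 : R) u : u \in r -> P u ->
  f u <= \big[Order.max/i0]_(w <- r | P w) f w.
Proof.
elim: r => // x r IH; rewrite inE big_cons => /orP[/eqP ->|ur] Pu.
  by rewrite Pu le_max lexx.
case: ifP => _; last exact: IH.
by rewrite le_max (IH ur Pu) orbT.
Qed.

Lemma sub_le (R : realType) (chi : Type) (k gamma : nat)
  (dH : ('I_k -> chi) -> R) : (1 <= gamma)%N -> is_Hmetric dH gamma ->
  forall p p', (forall x, entries p x -> entries p' x) ->
  dH p <= gamma%:R * dH p'.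
Proof.
move=> g1 [h0 [_ _ _ h4 h5]] p p' sub.
case: (boolp.pselect (exists x, entries p' x /\ ~ entries p x)) => [ex|nex].
  apply: le_trans (h4 p p' sub ex) _.
  rewrite -[X in X <= _]mul1r; apply: ler_wpM2r => //.
  by rewrite ler1n.
apply: h5 => x; split; first exact: sub.
move=> px; case: (boolp.pselect (entries p x)) => // npx.
by exfalso; apply: nex; exists x.
Qed.

Lemma block_bound (R : realType) (chi : Type) (k gamma m : nat)
  (dH : ('I_k -> chi) -> R) (atime : 'I_m -> R) (pos : 'I_m -> chi)
  (F : {set 'I_m}) :
  (2 <= k)%N -> (1 <= gamma)%N -> is_Hmetric dH gamma -> #|F| = k ->
  \sum_(e in Epairs m | e \subset F)
     ((gamma%:R * (k ^ 2)%:R)^-1 * pair_cost dH atime pos e)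
   <= opt_cost dH atime pos F.
Proof.
move=> k2 g1 hH cF.
have [h0 _] := hH.
rewrite /opt_cost.
case E: (enum F) => [|x0 s].
  by move: cF; rewrite cardE E /= => k0; lia.
set tmax := \big[Order.max/atime x0]_(w in F) atime w.
set D := dH _.
set T := \sum_(v in F) (tmax - atime v).
have tmaxP : forall u, u \in F -> atime u <= tmax.
  by move=> u uF; apply: le_bigmax_seq => //; apply: mem_index_enum.
have T0 : 0 <= T by apply: sumr_ge0 => v vF; rewrite subr_ge0 tmaxP.
have TP : forall u, u \in F -> tmax - atime u <= T.
  move=> u uF; rewrite /T (bigD1 u) //= lerDl.
  by apply: sumr_ge0 => v /andP[vF _]; rewrite subr_ge0 tmaxP.
have D0 : 0 <= D := h0 _.
have entF : forall u, u \in F ->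
    entries (fun j : 'I_k => pos (nth x0 (x0 :: s) j)) (pos u).
  move=> u uF; rewrite -E.
  have ui : (index u (enum F) < k)%N by rewrite -cF cardE index_mem mem_enum.
  by exists (Ordinal ui); rewrite /= nth_index ?mem_enum.
have halfle : forall u w, u \in F -> w \in F ->
    dH (fun j : 'I_k => if val j == 0%N then pos u else pos w) <= gamma%:R * D.
  move=> u w uF wF; apply: (@sub_le _ _ _ _ dH g1 hH) => x [j <-].
  by case: ifP => _; apply: entF.
have gr : 1 <= gamma%:R :> R by rewrite ler1n.
have TgT : T <= gamma%:R * T by rewrite -{1}[T]mul1r ler_wpM2r.
have pcb : forall e, e \in Epairs m -> e \subset F ->
    pair_cost dH atime pos e <= 2 * gamma%:R * (D + T).
  move=> e; rewrite inE => /eqP e2 eF.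
  rewrite /pair_cost.
  have se : size (enum e) = 2%N by rewrite -cardE.
  case Ee: (enum e) se => [|u [|w [|]]] // _.
  have uF : u \in F.
    by apply: (fintype.subsetP eF); rewrite -mem_enum Ee inE eqxx.
  have wF : w \in F.
    by apply: (fintype.subsetP eF); rewrite -mem_enum Ee !inE eqxx orbT.
  rewrite /dmet.
  have h1 := halfle u w uF wF; have h2 := halfle w u wF uF.
  have := TP u uF; have := TP w wF; have := tmaxP u uF; have := tmaxP w wF.
  move=> a1 a2 a3 a4.
  have ab : `|atime u - atime w| <= T.
    by rewrite ler_norml; apply/andP; split; lra.
  nra.
rewrite -mulr_sumr.
have z0 : 0 < gamma%:R * (k ^ 2)%:R :> R.
  by apply: mulr_gt0; rewrite ltr0n //; lia.
rewrite ler_pdivrMl //.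
apply: (@le_trans _ _ (\sum_(e in Epairs m | e \subset F) (2 * gamma%:R * (D + T)))).
  by apply: ler_sum => e /andP[eE eF]; apply: pcb.
have -> : \sum_(e in Epairs m | e \subset F) (2 * gamma%:R * (D + T)) =
          \sum_(e in [set e in Epairs m | e \subset F]) (2 * gamma%:R * (D + T)).
  by apply: eq_bigl => e; rewrite inE.
rewrite sumr_const.
have cN : #|[set e in Epairs m | e \subset F]| = 'C(k, 2).
  rewrite -cF -cards_draws; apply: eq_card => e; rewrite !inE andbC.
  by [].
rewrite cN bin2 -mulr_natr.
have hN : (((k * k.-1)./2) * 2 <= k * k)%N by lia.
have hNR : ((k * k.-1)./2)%:R * 2 <= k%:R * k%:R :> R.
  by rewrite -!natrM ler_nat.
rewrite natrX.
set N := ((k * k.-1)./2)%:R in hNR *.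
have Z0 : 0 <= gamma%:R * (D + T) by apply: mulr_ge0 => //; lra.
nra.
Qed.

Lemma obj_le (R : realType) (chi : Type) (k gamma m : nat)
  (dH : ('I_k -> chi) -> R) (atime : 'I_m -> R) (pos : 'I_m -> chi)
  (M : {set {set 'I_m}}) :
  (2 <= k)%N -> (1 <= gamma)%N -> is_Hmetric dH gamma ->
  perfect_kmatching k M ->
  LP_obj dH atime pos gamma (char_vec R (pairs_of M)) <= matching_cost dH atime pos M.
Proof.
move=> k2 g1 hH [pM cM].
have [h0 _] := hH.
have pc0 : forall e, 0 <= pair_cost dH atime pos e.
  move=> e; rewrite /pair_cost; case: (enum e) => [|u [|w [|]]] //.
  by apply: addr_ge0; [apply: addr_ge0; apply: h0 | apply: normr_ge0].
rewrite /LP_obj /matching_cost.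
set c := (gamma%:R * (k ^ 2)%:R)^-1.
have c0 : 0 <= c by rewrite invr_ge0 mulr_ge0 ?ler0n.
apply: (@le_trans _ _ (\sum_(F in M) \sum_(e in Epairs m | e \subset F)
                         (c * pair_cost dH atime pos e))); last first.
  by apply: ler_sum => F FM; apply: block_bound => //; apply: cM.
have -> : \sum_(F in M) \sum_(e in Epairs m | e \subset F)
                         (c * pair_cost dH atime pos e) =
   \sum_(F in M) \sum_(e in Epairs m)
           (if e \subset F then c * pair_cost dH atime pos e else 0).
  by apply: eq_bigr => F _; rewrite big_mkcondr.
rewrite exchange_big /=; apply: ler_sum => e eE.
have g0 : forall F : {set 'I_m}, 0 <= (if e \subset F then c * pair_cost dH atime pos e else 0).
  by move=> F; case: (e \subset F) => //; apply: mulr_ge0.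
rewrite /char_vec; case: ifP => eP; last first.
  by rewrite mulr0; apply: sumr_ge0 => F _.
move: eP; rewrite inE => /andP[_ /existsP[F0 /andP[F0M eF0]]].
rewrite mulr1 (bigD1 F0) //= eF0 lerDl.
by apply: sumr_ge0 => F _.
Qed.

Theorem lemma2 (R : realType) (chi : Type) (k gamma m : nat)
  (dH : ('I_k -> chi) -> R) (atime : 'I_m -> R) (pos : 'I_m -> chi)
  (M : {set {set 'I_m}}) :
  (2 <= k)%N -> (1 <= gamma <= k - 1)%N ->
  is_Hmetric dH gamma ->
  (k %| m)%N ->
  (forall i j : 'I_m, (i <= j)%N -> atime i <= atime j) ->
  perfect_kmatching k M ->
  LP_feasible k (char_vec R (pairs_of M)) /\
  LP_value dH atime pos gamma <= OPT dH atime pos.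
Proof.
move=> k2 /andP[g1 _] hH _ _ pM.
have k0 : (0 < k)%N by lia.
split; first exact: feas k0 pM.
have [h0 _] := hH.
rewrite /LP_value /OPT.
apply: lb_le_inf.
  by exists (matching_cost dH atime pos M); exists M.
move=> c [M' [pM' ->]].
have lb : has_lbound [set LP_obj dH atime pos gamma x | x in @LP_feasible R k m].
  exists 0 => y [x [_ xpos] <-].
  rewrite /LP_obj; apply: sumr_ge0 => e eE; apply: mulr_ge0; last exact: xpos.
  apply: mulr_ge0; first by rewrite invr_ge0 mulr_ge0 ?ler0n.
  rewrite /pair_cost; case: (enum e) => [|u [|w [|]]] //.
  by apply: addr_ge0; [apply: addr_ge0; apply: h0 | apply: normr_ge0].
apply: le_trans _ (@obj_le _ _ _ _ _ dH atime pos M' k2 g1 hH pM').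
apply: (ge_inf lb).
by exists (char_vec R (pairs_of M')) => //; apply: feas.
Qed.
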